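(* Let $D$ be any reduced divisor on $\mathbb P^1$. Then every vector bundle $E$ on $\mathbb P^1$ with $H^1(\mathbb P^1,E)=0$ is regular relative to $D$.
   Context: A vector bundle $E$ on a smooth curve $C$ is regular relative to a reduced divisor $D$ on $C$ if $H^1(C,E)=0$ and, for any distinct points $p_1,\dots,p_k\in D$ and general $1$-dimensional quotients $U_i$ of the fibres $E_{p_i}$, the natural map $H^0(C,E)\to\bigoplus_{i=1}^k U_i$ has maximal rank. *)

(* Defs.v *)
From HB Require Import structures.
From mathcomp Require Import all_boot all_order all_algebra all_field.
From mathcomp Require Import fraction mpoly.
Set Implicit Arguments. Unset Strict Implicit. Unset Printing Implicit Defensive.
Import GRing.Theory.
Local Notation tofrac := (@FracField.tofrac _).
Local Notation "x %:F" := (tofrac x).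
Local Open Scope ring_scope.

Section P1.
Variable K : fieldType.

(* k(t), the function field of P^1; U0 = Spec k[t], U1 = Spec k[u], u = 1/t. *)
Definition RF := {fraction {poly K}}.
Definition tvar : RF := ('X : {poly K})%:F.

(* elements of k[t, t^-1] = O(U0 ∩ U1) *)
Definition laurent (f : RF) : Prop :=
  exists (p : {poly K}) (n : nat), f = p%:F / tvar ^+ n.

(* regular functions on U0 (polynomials in t) and on U1 (polynomials in u = 1/t),
   restricted to the overlap *)
Definition emb0 (p : {poly K}) : RF := p%:F.
Definition emb1 (p : {poly K}) : RF := (map_poly (fun c : K => c%:P%:F) p).[tvar^-1].

(* A vector bundle of rank rk on P^1: trivial on U0 and U1, glued by a transition
   matrix g in GL_rk(k[t,t^-1]); a section is (s0, s1) with s0 = g s1 on U0 ∩ U1. *)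
Record bundle := Bundle {
  rk : nat;
  trans : 'M[RF]_rk;
  trans_unit : trans \in unitmx;
  trans_laurent : forall i j, laurent (trans i j);
  trans_inv_laurent : forall i j, laurent (invmx trans i j) }.

Definition is_section (E : bundle) (s0 s1 : 'cV[{poly K}]_(rk E)) : Prop :=
  map_mx emb0 s0 = trans E *m map_mx emb1 s1.

(* Čech H^1 for the cover {U0, U1}: cokernel of (a, b) |-> a - g b *)
Definition H1_vanishes (E : bundle) : Prop :=
  forall v : 'cV[RF]_(rk E), (forall i, laurent (v i 0)) ->
    exists a b : 'cV[{poly K}]_(rk E), v = map_mx emb0 a - trans E *m map_mx emb1 b.

(* Points of P^1(K): Some c is t = c (in U0), None is the point at infinity u = 0 (in U1).
   The fibre E_p is identified with K^rk via the chart trivialization. *)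
Definition fibre_eval (E : bundle) (p : option K) (s0 s1 : 'cV[{poly K}]_(rk E))
  : 'cV[K]_(rk E) :=
  match p with
  | Some c => map_mx (fun q => q.[c]) s0
  | None => map_mx (fun q => q.[0]) s1
  end.

(* The map H^0(E) -> ⊕_i U_i, where U_i = E_{p_i} / ker (row i Phi) ≅ K via row i Phi. *)
Definition quot_map (E : bundle) (m : nat) (ps : m.-tuple (option K))
  (Phi : 'M[K]_(m, rk E)) (s0 s1 : 'cV[{poly K}]_(rk E)) : 'cV[K]_m :=
  \col_i (row i Phi *m fibre_eval (tnth ps i) s0 s1) 0 0.

(* maximal rank (between finite-dimensional spaces) = injective or surjective *)
Definition max_rank_on_sections (E : bundle) (m : nat) (ps : m.-tuple (option K))
  (Phi : 'M[K]_(m, rk E)) : Prop :=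
  (forall s0 s1 t0 t1, is_section s0 s1 -> is_section t0 t1 ->
      quot_map ps Phi s0 s1 = quot_map ps Phi t0 t1 -> s0 = t0 /\ s1 = t1)
  \/ (forall w : 'cV[K]_m, exists s0 s1, is_section s0 s1 /\ quot_map ps Phi s0 s1 = w).

(* E is regular relative to the reduced divisor D (a duplicate-free list of points):
   H^1(E) = 0, and for all distinct p_1..p_m in D, for general 1-dimensional quotients
   (i.e. for all Phi outside a proper Zariski-closed subset {F = 0} of the space of
   tuples of functionals) the map has maximal rank. *)
Definition regular_rel (E : bundle) (D : seq (option K)) : Prop :=
  H1_vanishes E /\
  forall (m : nat) (ps : m.-tuple (option K)), uniq ps -> {subset ps <= D} ->
    exists F : {mpoly K[m * rk E]}, F != 0 /\
      forall Phi : 'M[K]_(m, rk E),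
        (forall i, row i Phi != 0) ->
        F.@[fun j => mxvec Phi 0 j] != 0 ->
        max_rank_on_sections ps Phi.

End P1.

(* Main.v *)
Require Import Defs.
From HB Require Import structures.
From mathcomp Require Import all_boot all_order all_algebra all_field.
From mathcomp Require Import fraction mpoly.
From Stdlib Require Import Classical.
From mathcomp Require Import ring.
Set Implicit Arguments. Unset Strict Implicit. Unset Printing Implicit Defensive.
Import GRing.Theory.
Local Open Scope ring_scope.
Local Notation tofrac := (@FracField.tofrac _).
Local Notation "x %:F" := (tofrac x).
Section P1L.
Variable K : fieldType.
Local Notation tv := (tvar K).
Definition f0 : {rmorphism K -> RF K} := (tofrac \o polyC).
Definition emb1r : {rmorphism {poly K} -> RF K} := horner_eval tv^-1 \o map_poly f0.
Lemma emb1rE (p : {poly K}) : emb1 p = emb1r p.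
Proof. reflexivity. Qed.
Lemma tv_neq0 : tv != 0.
Proof. by rewrite /tvar tofrac_eq0 polyX_eq0. Qed.
Lemma emb0M (p q : {poly K}) : emb0 (p * q) = emb0 p * emb0 q.
Proof. by rewrite /emb0 tofracM. Qed.
Lemma emb0D (p q : {poly K}) : emb0 (p + q) = emb0 p + emb0 q.
Proof. by rewrite /emb0 tofracD. Qed.
Lemma emb0X : emb0 (K:=K) 'X = tv. Proof. by []. Qed.
Lemma emb1X : emb1 (K:=K) 'X = tv^-1.
Proof. by rewrite emb1rE /= /horner_eval map_polyX hornerX. Qed.
Lemma emb1C (c : K) : emb1 c%:P = emb0 c%:P.
Proof. by rewrite emb1rE /= /horner_eval map_polyC hornerC. Qed.
Lemma emb0C0 (c : K) : emb0 c%:P = f0 c. Proof. by []. Qed.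

Lemma emb1_rev (N : nat) (q : {poly K}) : (size q <= N.+1)%N ->
  emb1 q * tv ^+ N = emb0 (\poly_(j < N.+1) q`_(N - j)).
Proof.
move=> hs.
rewrite emb1rE /= /horner_eval (horner_coef_wide _ (n:=N.+1)); last first.
  by rewrite size_map_poly.
rewrite poly_def /emb0 rmorph_sum mulr_suml /=.
rewrite (reindex_inj rev_ord_inj) /=.
apply: eq_bigr => i _.
rewrite coef_map /= subSS.
rewrite -mul_polyC tofracM tofracXn -/tv.
have -> : tv ^+ N = tv ^+ (N - i) * tv ^+ i by rewrite -exprD subnK // -ltnS.
rewrite -mulrA mulrA -[_ * (tv ^+ (N - i) * _)]mulrA mulrA exprVn -mulrA (mulrA _ (tv ^+ (N - i))) mulVf ?mul1r //.
by rewrite expf_neq0 // tv_neq0.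
Qed.
End P1L.
Section P2L.
Variable K : fieldType.
Local Notation tv := (tvar K).

Lemma tvn_neq0 n : tv ^+ n != 0.
Proof. exact: expf_neq0 _ (tv_neq0 K). Qed.

Lemma laurent_emb0 (p : {poly K}) : laurent (emb0 p).
Proof. exists p, 0%N. rewrite /emb0 expr0 invr1 mulr1. reflexivity. Qed.
Lemma laurent0 : laurent (0 : RF K).
Proof. exists 0, 0%N. rewrite tofrac0 mul0r. reflexivity. Qed.
Lemma laurentD (f g : RF K) : laurent f -> laurent g -> laurent (f + g).
Proof.
move=> [p [a ->]] [q [b ->]]; exists (p * 'X^b + q * 'X^a), (a + b)%N.
rewrite (addf_div _ _ (tvn_neq0 a) (tvn_neq0 b)).
rewrite tofracD !tofracM !tofracXn -/tv exprD. reflexivity.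
Qed.
Lemma laurentM (f g : RF K) : laurent f -> laurent g -> laurent (f * g).
Proof.
move=> [p [a ->]] [q [b ->]]; exists (p * q), (a + b)%N.
rewrite mulf_div tofracM exprD. reflexivity.
Qed.
Lemma laurent_sum (I : finType) (F : I -> RF K) :
  (forall i, laurent (F i)) -> laurent (\sum_i F i).
Proof.
move=> h; elim/big_ind: _ => [|x y|i _]; [exact: laurent0 | exact: laurentD | exact: h].
Qed.
End P2L.
Section P3L.
Variable K : fieldType.
Local Notation tv := (tvar K).
Lemma lemD (c : K) (P q : {poly K}) (n : nat) :
  (tv - emb0 c%:P) * (P%:F / tv ^+ n) = emb1 q ->
  exists q', P%:F / tv ^+ n = emb1 q' /\ q'.[0] = 0.
Proof.
move=> H.
have [->|P0] := eqVneq P 0.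
  exists 0; rewrite tofrac0 mul0r horner0; split; last by [].
  by rewrite emb1rE rmorph0.
set N := size q.
have hQ := emb1_rev (N := N) (q := q) (leqnSn _).
set Q := \poly_(j < N.+1) q`_(N - j) in hQ.
have E : ('X - c%:P) * P * 'X^N = Q * 'X^n.
  apply/eqP; rewrite -tofrac_eq; apply/eqP.
  rewrite !tofracM !tofracXn tofracB -/tv.
  rewrite -[Q%:F]/(emb0 Q) -hQ -H.
  rewrite -(mulrA _ (tv^+N)) (mulrC (tv^+N)) mulrA -(mulrA _ _ (tv ^+ n)).
  rewrite (divfK (tvn_neq0 K n)). reflexivity.
have hsP : (size P <= n)%N.
  have szL : size (('X - c%:P) * P * 'X^N) = (size P + N.+1)%N :> nat.
    have hX : ('X - c%:P) != 0 by rewrite polyXsubC_eq0.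
    have hXn : ('X^N : {poly K}) != 0 by exact: monic_neq0 (monicXn _ _).
    rewrite (size_mul (mulf_neq0 hX P0) hXn) (size_mul hX P0).
    by rewrite size_XsubC size_polyXn.
  have szR : (size (Q * 'X^n)%R <= N.+1 + n)%N.
    apply: (leq_trans (size_polyMleq Q 'X^n)).
    rewrite size_polyXn addnS /=.
    apply: leq_add (leqnn _).
    exact: size_poly.
  move: szR; rewrite -E szL addnC.
  by rewrite leq_add2l.
set q' := \poly_(j < n.+1) P`_(n - j).
have hq' := emb1_rev (N := n) (q := q') (size_poly _ _).
have hP : \poly_(j < n.+1) q'`_(n - j) = P.
  apply/polyP => j; rewrite coef_poly.
  case: ltnP => hj.
    rewrite /q' coef_poly ifT; last by rewrite ltnS leq_subr.
    by rewrite subKn // -ltnS.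
  by rewrite nth_default // (leq_trans hsP) // ltnW.
exists q'; split.
  rewrite -[emb1 q'](mulfK (tvn_neq0 K n)) hq' hP. reflexivity.
rewrite horner_coef0 /q' coef_poly /= subn0.
by rewrite nth_default.
Qed.
End P3L.
Section P4L.
Variable K : fieldType.
Local Notation tv := (tvar K).
Lemma emb1_inj (q : {poly K}) : emb1 q = 0 -> q = 0.
Proof.
move=> h.
have := emb1_rev (N := size q) (q := q) (leqnSn _).
rewrite h mul0r => /esym /eqP; rewrite /emb0 tofrac_eq0 => /eqP hQ.
apply/polyP => i; rewrite coef0.
case: (ltnP i (size q)) => hi; last by rewrite nth_default.
have := congr1 (fun p : {poly K} => p`_(size q - i)) hQ.
rewrite coef_poly coef0 ifT; last by rewrite ltnS leq_subr.
by rewrite subKn // ltnW.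
Qed.

Lemma sum_lt (r : nat) (a b : 'I_r -> nat) :
  (forall l, a l <= b l)%N -> (exists l, a l < b l)%N ->
  (\sum_l a l < \sum_l b l)%N.
Proof.
move=> hle [l hl].
rewrite (bigD1 l) //= [X in (_ < X)%N](bigD1 l) //=.
rewrite -addSn leq_add //.
by apply: leq_sum => i _.
Qed.
End P4L.
Section P5L.
Variable K : fieldType.
Variable E : bundle K.
Local Notation tv := (tvar K).
Local Notation r := (rk E).
Local Notation g := (trans E).

Definition cons (P : nat -> option K) (phi : nat -> 'rV[K]_r) (n : nat)
  (s0 s1 : 'cV[{poly K}]_r) : Prop :=
  forall i, (i < n)%N -> (phi i *m fibre_eval (P i) s0 s1) 0 0 = 0.

Lemma sec_inv (s0 s1 : 'cV[{poly K}]_r) : is_section s0 s1 ->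
  map_mx (@emb1 K) s1 = invmx g *m map_mx (@emb0 K) s0.
Proof. by rewrite /is_section => ->; rewrite mulKmx // trans_unit. Qed.

Lemma sec_s0_nz (s0 s1 : 'cV[{poly K}]_r) : is_section s0 s1 ->
  ~ (s0 = 0 /\ s1 = 0) -> s0 != 0.
Proof.
move=> hs hnz; apply/eqP => h0; apply: hnz; split=> //.
have := sec_inv hs; rewrite h0.
have -> : map_mx (@emb0 K) (0 : 'cV_r) = 0.
  by apply/matrixP => i j; rewrite !mxE /emb0 tofrac0.
rewrite mulmx0 => h; apply/matrixP => i j.
have := congr1 (fun M : 'M[RF K]_(r,1) => M i j) h; rewrite !mxE => /emb1_inj ->.
reflexivity.
Qed.

Lemma sec_s1_nz (s0 s1 : 'cV[{poly K}]_r) : is_section s0 s1 ->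
  ~ (s0 = 0 /\ s1 = 0) -> s1 != 0.
Proof.
move=> hs hnz; apply/eqP => h1; apply: hnz; split=> //.
move: hs; rewrite /is_section h1.
have -> : map_mx (@emb1 K) (0 : 'cV_r) = 0.
  by apply/matrixP => i j; rewrite !mxE emb1rE rmorph0.
rewrite mulmx0 => h; apply/matrixP => i j.
have := congr1 (fun M : 'M[RF K]_(r,1) => M i j) h; rewrite !mxE /emb0 => /eqP.
by rewrite tofrac_eq0 => /eqP.
Qed.
End P5L.
Section P6L.
Variable K : fieldType.
Variable E : bundle K.
Local Notation tv := (tvar K).
Local Notation r := (rk E).
Local Notation g := (trans E).

Lemma size_mulXsubC (p : {poly K}) (c : K) : p != 0 ->
  size (p * ('X - c%:P)) = (size p).+1.
Proof.
move=> hp; rewrite size_mul // ?polyXsubC_eq0 // size_XsubC addn2 //.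
Qed.

Lemma size_mulXsubC_le (p : {poly K}) (c : K) : (size p <= size (p * ('X - c%:P))%R)%N.
Proof.
have [->|hp] := eqVneq p 0; first by rewrite mul0r.
by rewrite size_mulXsubC.
Qed.

Lemma emb0XsubC (c : K) : emb0 ('X - c%:P) = tv - emb0 c%:P.
Proof. by rewrite /emb0 tofracB. Qed.

Lemma fibre_root (c : K) (s0 s1 : 'cV[{poly K}]_r) :
  fibre_eval (Some c) s0 s1 = 0 -> forall l, root (s0 l 0) c.
Proof.
move=> h l; apply/eqP.
have := congr1 (fun M : 'cV[K]_r => M l 0) h; rewrite /= !mxE; exact.
Qed.

Lemma stepSome (c : K) P phi n (s0 s1 : 'cV[{poly K}]_r) :
  (forall i, (i < n)%N -> P i <> Some c) ->
  is_section s0 s1 -> cons P phi n s0 s1 -> fibre_eval (Some c) s0 s1 = 0 ->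
  s0 != 0 ->
  exists t0 t1, [/\ is_section t0 t1, cons P phi n t0 t1, t0 != 0 &
     (\sum_l size (t0 l 0%R) < \sum_l size (s0 l 0%R))%N].
Proof.
move=> hP hs hc hf hnz.
have hroot := fibre_root hf.
set t0 := map_mx (fun q => q %/ ('X - c%:P)) s0.
have ht0 : forall l, s0 l 0 = t0 l 0 * ('X - c%:P).
  by move=> l; rewrite mxE divpK // dvdp_XsubCl.
have e0 : map_mx (@emb0 K) s0 = (tv - emb0 c%:P) *: map_mx (@emb0 K) t0.
  apply/matrixP => l j; rewrite (ord1 j) [LHS]mxE [in LHS](ht0 l) !mxE emb0M emb0XsubC mulrC.
  reflexivity.
set f := invmx g *m map_mx (@emb0 K) t0.
have e1 : map_mx (@emb1 K) s1 = (tv - emb0 c%:P) *: f.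
  by rewrite (sec_inv hs) e0 scalemxAr.
have hl : forall l, exists q', f l 0 = emb1 q' /\ q'.[0] = 0.
  move=> l.
  have [P' [k hk]] : laurent (f l 0).
    rewrite mxE; apply: laurent_sum => j; apply: laurentM.
      exact: trans_inv_laurent.
    rewrite mxE; exact: laurent_emb0.
  rewrite hk; apply: (lemD (c:=c) (q := s1 l 0)); rewrite -hk.
  have := congr1 (fun M : 'cV[RF K]_r => M l 0) e1; rewrite /= !mxE => <-.
  reflexivity.
have [Qf hQf] := fin_all_exists hl.
set t1 := \col_l Qf l.
have et1 : map_mx (@emb1 K) t1 = f.
  apply/matrixP => l j; rewrite (ord1 j) [LHS]mxE /t1 [in LHS]mxE -(hQf l).1. reflexivity.
exists t0, t1; split.
- by rewrite /is_section et1 /f mulKVmx // trans_unit.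
- move=> i hi; have := hc i hi; have hne := hP i hi.
  case eP: (P i) => [ci|] /=.
    have hfe : map_mx (fun q => q.[ci]) s0 = (ci - c) *: map_mx (fun q => q.[ci]) t0.
      apply/matrixP => l j; rewrite (ord1 j) [LHS]mxE [in LHS](ht0 l) !mxE hornerM hornerXsubC mulrC.
      reflexivity.
    rewrite hfe -scalemxAr mxE => /eqP; rewrite mulf_eq0 => /orP [|/eqP //].
    by rewrite subr_eq0 => /eqP hcc; case: hne; rewrite eP hcc.
  move=> _.
  have -> : map_mx (fun q => q.[0]) t1 = 0.
    apply/matrixP => l j; rewrite !mxE (hQf l).2. reflexivity.
  by rewrite mulmx0 mxE.
- apply: contra hnz => /eqP ht; apply/eqP/matrixP => l j.
  rewrite (ord1 j) ht0 ht !mxE mul0r. reflexivity.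
- apply: sum_lt => [l|].
    by rewrite ht0 size_mulXsubC_le.
  have [l hl0] : exists l, t0 l 0 != 0.
    apply/existsP; apply: contraR hnz; rewrite negb_exists => /forallP h.
    apply/eqP/matrixP => l j; rewrite (ord1 j) ht0.
    have := h l; rewrite negbK => /eqP ->; rewrite mul0r mxE. reflexivity.
  by exists l; rewrite ht0 size_mulXsubC.
Qed.
End P6L.
Section P7L.
Variable K : fieldType.
Variable E : bundle K.
Local Notation tv := (tvar K).
Local Notation r := (rk E).
Local Notation g := (trans E).

Lemma emb1M (p q : {poly K}) : emb1 (p * q) = emb1 p * emb1 q.
Proof. by rewrite !emb1rE rmorphM. Qed.

Lemma stepNone P phi n (s0 s1 : 'cV[{poly K}]_r) :
  (forall i, (i < n)%N -> P i <> None) ->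
  is_section s0 s1 -> cons P phi n s0 s1 -> fibre_eval None s0 s1 = 0 ->
  s1 != 0 ->
  exists t0 t1, [/\ is_section t0 t1, cons P phi n t0 t1, t1 != 0 &
     (\sum_l size (t1 l 0%R) < \sum_l size (s1 l 0%R))%N].
Proof.
move=> hP hs hc hf hnz.
have hroot : forall l, root (s1 l 0) 0.
  move=> l; apply/eqP.
  have := congr1 (fun M : 'cV[K]_r => M l 0) hf; rewrite /= !mxE; exact.
set t1 := map_mx (fun q => q %/ ('X - 0%:P)) s1.
have ht1 : forall l, s1 l 0 = t1 l 0 * ('X - 0%:P).
  by move=> l; rewrite mxE divpK // dvdp_XsubCl.
set t0 := map_mx (fun q => q * ('X - 0%:P)) s0.
have e0 : map_mx (@emb0 K) t0 = tv *: map_mx (@emb0 K) s0.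
  apply/matrixP => l j; rewrite !mxE polyC0 subr0 emb0M emb0X mulrC.
  reflexivity.
have e1 : map_mx (@emb1 K) s1 = tv^-1 *: map_mx (@emb1 K) t1.
  apply/matrixP => l j; rewrite (ord1 j) [LHS]mxE (ht1 l) [RHS]mxE [in RHS]mxE.
  rewrite polyC0 subr0 emb1M emb1X mulrC.
  reflexivity.
exists t0, t1; split.
- rewrite /is_section e0 hs e1 scalemxAr scalerA (mulfV (tv_neq0 K)) scale1r.
  reflexivity.
- move=> i hi; have := hc i hi; have hne := hP i hi.
  case eP: (P i) => [ci|] /=; last by case: hne.
  have hfe : map_mx (fun q => q.[ci]) t0 = ci *: map_mx (fun q => q.[ci]) s0.
    apply/matrixP => l j; rewrite !mxE hornerM hornerXsubC subr0 mulrC.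
    reflexivity.
  move=> H0; rewrite hfe -scalemxAr [LHS]mxE H0 mulr0. reflexivity.
- apply: contra hnz => /eqP ht; apply/eqP/matrixP => l j.
  rewrite (ord1 j) ht1 ht !mxE mul0r. reflexivity.
- apply: sum_lt => [l|].
    by rewrite ht1 size_mulXsubC_le.
  have [l hl0] : exists l, t1 l 0 != 0.
    apply/existsP; apply: contraR hnz; rewrite negb_exists => /forallP h.
    apply/eqP/matrixP => l j; rewrite (ord1 j) ht1.
    have := h l; rewrite negbK => /eqP ->; rewrite mul0r mxE. reflexivity.
  by exists l; rewrite ht1 size_mulXsubC.
Qed.
End P7L.
Section P8L.
Variable K : fieldType.
Variable E : bundle K.
Local Notation r := (rk E).

Lemma lemX P phi n (p : option K) (s0 s1 : 'cV[{poly K}]_r) :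
  (forall i, (i < n)%N -> P i <> p) ->
  is_section s0 s1 -> ~ (s0 = 0 /\ s1 = 0) -> cons P phi n s0 s1 ->
  exists t0 t1, [/\ is_section t0 t1, cons P phi n t0 t1 & fibre_eval p t0 t1 != 0].
Proof.
move=> hP hs hnz hc.
case: p hP => [c|] hP.
  have hnz0 := sec_s0_nz hs hnz.
  move: (ltnSn (\sum_l size (s0 l 0%R))).
  move: {-1}(\sum_l size (s0 l 0%R)).+1 => k.
  elim: k s0 s1 hs hnz0 hc {hnz} => [|k IH] s0 s1 hs hnz hc hk; first by [].
  have [hf|hf] := eqVneq (fibre_eval (Some c) s0 s1) 0; last by exists s0, s1.
  have [t0 [t1 [ht hct hnt hm]]] := stepSome hP hs hc hf hnz.
  apply: (IH t0 t1 ht hnt hct).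
  exact: leq_trans hm _.
have hnz1 := sec_s1_nz hs hnz.
move: (ltnSn (\sum_l size (s1 l 0%R))).
move: {-1}(\sum_l size (s1 l 0%R)).+1 => k.
elim: k s0 s1 hs hnz1 hc {hnz} => [|k IH] s0 s1 hs hnz hc hk; first by [].
have [hf|hf] := eqVneq (fibre_eval None s0 s1) 0; last by exists s0, s1.
have [t0 [t1 [ht hct hnt hm]]] := stepNone hP hs hc hf hnz.
apply: (IH t0 t1 ht hnt hct).
exact: leq_trans hm _.
Qed.
End P8L.
Section P9L.
Variable K : fieldType.
Variable E : bundle K.
Local Notation r := (rk E).

Definition Wzero P phi k :=
  forall s0 s1 : 'cV[{poly K}]_r, is_section s0 s1 -> cons P phi k s0 s1 -> s0 = 0 /\ s1 = 0.

Definition ginv P (phi : nat -> 'rV[K]_r) (S : nat -> 'cV[{poly K}]_r * 'cV[{poly K}]_r) k :=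
  forall j, (j < k)%N -> [/\ is_section (S j).1 (S j).2, cons P phi j (S j).1 (S j).2 &
     (phi j *m fibre_eval (P j) (S j).1 (S j).2) 0 0 != 0].

Lemma cons_ext P phi phi' j (s0 s1 : 'cV[{poly K}]_r) :
  (forall i, (i < j)%N -> phi' i = phi i) ->
  cons P phi' j s0 s1 <-> cons P phi j s0 s1.
Proof.
move=> h; split=> hc i hi; [rewrite -h // | rewrite h //]; exact: hc.
Qed.

Lemma greedy (P : nat -> option K) (m : nat) :
  (forall i j, (i < m)%N -> (j < m)%N -> P i = P j -> i = j) ->
  exists k phi S, [/\ (k <= m)%N, ginv P phi S k & (k = m \/ Wzero P phi k)].
Proof.
move=> hinj.
suff: forall n, (n <= m)%N -> exists k phi S, [/\ (k <= n)%N, ginv P phi S k & (k = n \/ Wzero P phi k)].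
  by move=> /(_ m (leqnn m)).
elim=> [|n IH] hn.
  exists 0%N, (fun _ => 0), (fun _ => (0, 0)); split => //; last by left.
have [k [phi [S [hk hg hor]]]] := IH (ltnW hn).
have [hkn|hkn] := eqVneq k n; last first.
  exists k, phi, S; split => //; first by rewrite (leq_trans hk).
  by right; case: hor => // /eqP; rewrite (negbTE hkn).
subst k.
case: (classic (Wzero P phi n)) => hW.
  by exists n, phi, S; split => //; right.
have [s0 [s1 [hs hc hnz]]] : exists s0 s1 : 'cV[{poly K}]_r,
    [/\ is_section s0 s1, cons P phi n s0 s1 & ~ (s0 = 0 /\ s1 = 0)].
  apply: NNPP => hne; apply: hW => s0 s1 hs hc.
  apply: NNPP => hnz; apply: hne; by exists s0, s1.
have hP : forall i, (i < n)%N -> P i <> P n.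
  move=> i hi /hinj; move/(_ (ltn_trans hi hn) hn) => hin.
  by move: hi; rewrite hin ltnn.
have [t0 [t1 [ht hct hnt]]] := lemX hP hs hnz hc.
set v := fibre_eval (P n) t0 t1 in hnt.
have [l hl] : exists l, v l 0 != 0.
  apply: NNPP => hne; move/negP: hnt; apply; apply/eqP/matrixP => l j.
  rewrite (ord1 j) mxE; apply/eqP; apply: NNPP => hne2; apply: hne; exists l.
  exact/negP.
exists n.+1, (fun i => if i == n then 'e_l else phi i),
  (fun i => if i == n then (t0, t1) else S i); split => //; last by left.
move=> j; rewrite ltnS leq_eqVlt => /orP [/eqP ->|hj].
  rewrite eqxx /=; split => //.
    apply/(cons_ext _ _ (phi := phi)) => // i hi.
    by rewrite (ltn_eqF hi).
  by rewrite -rowE mxE.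
rewrite (ltn_eqF hj); have [h1 h2 h3] := hg j hj; split => //.
apply/(cons_ext _ _ (phi := phi)) => // i hi.
by rewrite (ltn_eqF (ltn_trans hi hj)).
Qed.
End P9L.
Section P10L.
Variable K : fieldType.
Variable E : bundle K.
Local Notation r := (rk E).
Local Notation g := (trans E).

Lemma map_emb1E m n (M : 'M[{poly K}]_(m, n)) : map_mx (@emb1 K) M = map_mx (emb1r K) M.
Proof. by apply/matrixP => i j; rewrite !mxE emb1rE. Qed.
Lemma map_emb0E m n (M : 'M[{poly K}]_(m, n)) :
  map_mx (@emb0 K) M = map_mx (tofrac : {rmorphism {poly K} -> RF K}) M.
Proof. by apply/matrixP => i j; rewrite !mxE. Qed.

Lemma sec_sub (a0 a1 b0 b1 : 'cV[{poly K}]_r) :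
  is_section a0 a1 -> is_section b0 b1 -> is_section (a0 - b0) (a1 - b1).
Proof.
rewrite /is_section => ha hb.
by rewrite map_emb0E map_emb1E !map_mxB -!map_emb0E -!map_emb1E ha hb mulmxBr.
Qed.

Lemma fibre_sub p (a0 a1 b0 b1 : 'cV[{poly K}]_r) :
  fibre_eval p (a0 - b0) (a1 - b1) = fibre_eval p a0 a1 - fibre_eval p b0 b1.
Proof.
by case: p => [c|]; apply/matrixP => i j; rewrite !mxE hornerD hornerN.
Qed.

Lemma quot_sub m (ps : m.-tuple (option K)) (Phi : 'M[K]_(m, r)) (a0 a1 b0 b1 : 'cV[{poly K}]_r) :
  quot_map ps Phi (a0 - b0) (a1 - b1) = quot_map ps Phi a0 a1 - quot_map ps Phi b0 b1.
Proof.
apply/matrixP => i j; rewrite !mxE fibre_sub -sumrB.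
by apply: eq_bigr => l _; rewrite !mxE mulrBr.
Qed.

Section Comb.
Variable k : nat.
Variable S : nat -> 'cV[{poly K}]_r * 'cV[{poly K}]_r.

Definition Fm (p : option K) : 'M[K]_(r, k) :=
  \matrix_(l, j) fibre_eval p (S j).1 (S j).2 l 0.
Definition S0m : 'M[{poly K}]_(r, k) := \matrix_(l, j) (S j).1 l 0.
Definition S1m : 'M[{poly K}]_(r, k) := \matrix_(l, j) (S j).2 l 0.
Definition comb0 (x : 'cV[K]_k) := S0m *m map_mx polyC x.
Definition comb1 (x : 'cV[K]_k) := S1m *m map_mx polyC x.
Definition Bm m (ps : m.-tuple (option K)) (Phi : 'M[K]_(m, r)) : 'M[K]_(m, k) :=
  \matrix_(i, j) (row i Phi *m Fm (tnth ps i)) 0 j.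

Lemma fe_comb p x : fibre_eval p (comb0 x) (comb1 x) = Fm p *m x.
Proof.
case: p => [c|]; apply/matrixP => l j; rewrite !mxE horner_sum;
  apply: eq_bigr => i _; rewrite !mxE hornerM hornerC; reflexivity.
Qed.

Lemma quot_comb m (ps : m.-tuple (option K)) Phi x :
  quot_map ps Phi (comb0 x) (comb1 x) = Bm ps Phi *m x.
Proof.
apply/matrixP => i j; rewrite (ord1 j) [LHS]mxE fe_comb mulmxA [LHS]mxE [RHS]mxE.
by apply: eq_bigr => l _; rewrite !mxE.
Qed.

Lemma sec_comb x : (forall j, (j < k)%N -> is_section (S j).1 (S j).2) ->
  is_section (comb0 x) (comb1 x).
Proof.
move=> hS.
have e : map_mx (@emb0 K) S0m = g *m map_mx (@emb1 K) S1m.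
  apply/matrixP => a j.
  have := congr1 (fun M : 'cV[RF K]_r => M a 0) (hS j (ltn_ord j)).
  rewrite /= !mxE => ->; apply: eq_bigr => b _; rewrite !mxE. reflexivity.
have eC : map_mx (@emb0 K) (map_mx polyC x) = map_mx (@emb1 K) (map_mx polyC x).
  by apply/matrixP => a b; rewrite !mxE emb1C.
rewrite /is_section /comb0 /comb1 map_emb0E map_mxM -!map_emb0E e eC.
by rewrite map_emb1E [in RHS]map_emb1E map_mxM mulmxA.
Qed.
End Comb.
End P10L.
Section P11L.
Variable K : fieldType.
Variable E : bundle K.
Local Notation r := (rk E).

Lemma Fm_entry k S p (v : 'rV[K]_r) (j : 'I_k) :
  (v *m Fm k S p) 0 j = (v *m fibre_eval p (S j).1 (S j).2) 0 0.
Proof. by rewrite !mxE; apply: eq_bigr => l _; rewrite !mxE. Qed.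

Definition Am m (ps : m.-tuple (option K)) k (hk : (k <= m)%N) S (Phi : 'M[K]_(m, r)) : 'M[K]_k :=
  \matrix_(i, j) Bm k S ps Phi (widen_ord hk i) j.

Lemma BA m (ps : m.-tuple (option K)) k (hk : (k <= m)%N) S Phi (x : 'cV[K]_k) (i : 'I_k) :
  (Bm k S ps Phi *m x) (widen_ord hk i) 0 = (Am ps hk S Phi *m x) i 0.
Proof. by rewrite !mxE; apply: eq_bigr => j _; rewrite !mxE. Qed.

Lemma quot_entry m (ps : m.-tuple (option K)) Phi (s0 s1 : 'cV[{poly K}]_r) (i : 'I_m) :
  quot_map ps Phi s0 s1 i 0 = (row i Phi *m fibre_eval (nth None ps i) s0 s1) 0 0.
Proof. by rewrite mxE (tnth_nth None). Qed.

Lemma comb_zero k S : comb0 (E:=E) (k:=k) S 0 = 0 /\ comb1 (E:=E) (k:=k) S 0 = 0.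
Proof.
by rewrite /comb0 /comb1; split; apply/matrixP => i j; rewrite !mxE big1 // => l _;
  rewrite !mxE polyC0 mulr0.
Qed.
End P11L.
Theorem mainTheorem5 (K : closedFieldType) (D : seq (option K)) (E : bundle K) :
  uniq D -> H1_vanishes E -> regular_rel E D.
Proof.
move=> _ hH; split => // m ps hu _.
set P := fun i => nth None ps i.
have hinj : forall i j, (i < m)%N -> (j < m)%N -> P i = P j -> i = j.
  move=> i j hi hj hij; apply/eqP; rewrite -(nth_uniq None _ _ hu) ?size_tuple //.
  by apply/eqP.
have [k [phi [S [hk hg hor]]]] := greedy E hinj.
set A := Am ps hk S.
set Mp : 'M[{mpoly K[m * rk E]}]_k := \matrix_(i, j) \sum_(l < rk E)
   'X_(mxvec_index (widen_ord hk i) l) * ((Fm k S (P i)) l j)%:MP.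
have hF : forall Phi : 'M[K]_(m, rk E),
    (\det Mp).@[fun j => mxvec Phi 0 j] = \det (A Phi).
  move=> Phi.
  rewrite -(det_map_mx (meval (fun j => mxvec Phi 0 j)) Mp); congr (\det _).
  apply/matrixP => i j; rewrite !mxE raddf_sum /=.
  apply: eq_bigr => l _; rewrite !mxE mevalM mevalXU mevalC mxvecE (tnth_nth None).
  reflexivity.
set Phi0 : 'M[K]_(m, rk E) := \matrix_(i, l) phi i 0 l.
have hrow0 : forall i : 'I_k, row (widen_ord hk i) Phi0 = phi i.
  by move=> i; apply/matrixP => a b; rewrite (ord1 a) !mxE.
have hA0 : forall i j, A Phi0 i j = (phi i *m fibre_eval (P i) (S j).1 (S j).2) 0 0.
  move=> i j; rewrite /A /Am mxE /Bm mxE hrow0 Fm_entry (tnth_nth None).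
  reflexivity.
have hdet0 : \det (A Phi0) != 0.
  rewrite det_trig; last first.
    apply/is_trig_mxP => i j hij; rewrite hA0.
    by have [_ hc _] := hg j (ltn_ord j); apply: hc.
  apply/prodf_neq0 => i _; rewrite hA0.
  by have [_ _ hn] := hg i (ltn_ord i).
have hU0 : A Phi0 \in unitmx by rewrite unitmxE unitfE.
have hsecS : forall j, (j < k)%N -> is_section (S j).1 (S j).2.
  by move=> j hj; have [] := hg j hj.
exists (\det Mp); split.
  apply/eqP => h0; move: hdet0; rewrite -hF h0 meval0 eqxx; done.
move=> Phi _ hFPhi.
have hU : A Phi \in unitmx by rewrite unitmxE unitfE -hF.
case: hor => [hkm|hW].
  right => w.
  set w' : 'cV[K]_k := \col_i w (widen_ord hk i) 0.
  exists (comb0 S (invmx (A Phi) *m w')), (comb1 S (invmx (A Phi) *m w')).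
  split; first exact: sec_comb.
  rewrite quot_comb; apply/matrixP => i j; rewrite (ord1 j).
  have hi : (i < k)%N by rewrite hkm.
  have -> : i = widen_ord hk (Ordinal hi) by apply: val_inj.
  rewrite BA mulKVmx // mxE.
  reflexivity.
left => s0 s1 t0 t1 hs ht heq.
have hd := sec_sub hs ht.
have hq : quot_map ps Phi (s0 - t0) (s1 - t1) = 0 by rewrite quot_sub heq subrr.
set y : 'cV[K]_k := \col_i quot_map ps Phi0 (s0 - t0) (s1 - t1) (widen_ord hk i) 0.
set x := invmx (A Phi0) *m y.
have he := sec_sub hd (sec_comb x hsecS).
have hce : cons P phi k (s0 - t0 - comb0 S x) (s1 - t1 - comb1 S x).
  move=> i hi.
  have := congr1 (fun M : 'cV[K]_m => M (widen_ord hk (Ordinal hi)) 0)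
    (quot_sub ps Phi0 (s0 - t0) (s1 - t1) (comb0 S x) (comb1 S x)).
  rewrite /= quot_entry hrow0 /= => ->.
  have hy : y (Ordinal hi) 0 = quot_map ps Phi0 (s0 - t0) (s1 - t1) (widen_ord hk (Ordinal hi)) 0.
    by rewrite mxE.
  rewrite [LHS]mxE quot_comb [X in _ + X]mxE BA /x (mulKVmx hU0) hy subrr.
  reflexivity.
have [he0 he1] := hW _ _ he hce.
move/eqP: he0; rewrite subr_eq0 => /eqP hd0.
move/eqP: he1; rewrite subr_eq0 => /eqP hd1.
have hx : x = 0.
  have : A Phi *m x = 0.
    apply/matrixP => i j; rewrite (ord1 j) -BA -quot_comb -hd0 -hd1 hq !mxE.
    reflexivity.
  by move=> h; rewrite -(mulKmx hU x) h mulmx0.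
have [c0 c1] := comb_zero (E := E) k S.
move: hd0 hd1; rewrite hx c0 c1 => /eqP; rewrite subr_eq0 => /eqP -> /eqP.
by rewrite subr_eq0 => /eqP ->.
Qed.
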